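(* Let $\Omega=\{\Omega_1,\dots,\Omega_N\}$ be a finite set of points with distance function $d$, let $1\le n<N$, and let $i,j\in\{1,\dots,n\}$. Let $x_1=MMJ(\Omega_i,\Omega_j~|~\Omega_{[1,n]})$, $t_1=MMJ(\Omega_{n+1},\Omega_i~|~\Omega_{[1,n+1]})$, $t_2=MMJ(\Omega_{n+1},\Omega_j~|~\Omega_{[1,n+1]})$ and $x_2=\max(t_1,t_2)$. Then $MMJ(\Omega_i,\Omega_j~|~\Omega_{[1,n+1]})=\min(x_1,x_2)$.
   Context: $\Omega$ is a finite set of points indexed $\Omega_1,\dots,\Omega_N$, and $\Omega_{[1,n]}=\{\Omega_1,\dots,\Omega_n\}$. $d:\Omega\times\Omega\to[0,\infty)$ is a distance function (e.g. Euclidean distance), symmetric with $d(x,x)=0$. For a subset $S\subseteq\Omega$, a path from $i$ to $j$ in $S$ is a finite sequence of points of $S$ (at least two) starting at $i$ and ending at $j$, with no repeated points except that start and end may coincide when $i=j$. A jump of a path is the distance $d(x,y)$ between two consecutive points $x,y$, and $max\_jump$ of a path is its largest jump. The Min-Max-Jump distance with context $S$ is $MMJ(i,j~|~S)=\min\{max\_jump(\epsilon): \epsilon \text{ a path from } i \text{ to } j \text{ in } S\}$ for $i,j\in S$, with $MMJ(i,i~|~S)=0$. *)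

(* Defs.v *)
From HB Require Import structures.
From mathcomp Require Import all_boot all_order all_algebra.
From mathcomp Require Import boolp classical_sets reals.
Set Implicit Arguments. Unset Strict Implicit. Unset Printing Implicit Defensive.
Import Order.TTheory GRing.Theory Num.Theory.
Local Open Scope ring_scope.
Local Open Scope classical_set_scope.

Section MMJ.
Variables (R : realType) (N : nat) (d : 'I_N -> 'I_N -> R).

(* The point Omega_{k+1} is represented by its (0-based) index k : 'I_N. *)

(* Omega_[1,n] = {Omega_1,...,Omega_n} = indices 0,...,n-1. *)
Definition Omega_upto (n : nat) : {pred 'I_N} := [pred k : 'I_N | k < n]%N.

(* A path from i to j in S: the sequence i :: p, at least two points,
   ending at j, all in S, with no repeated points except that the first and
   last may coincide (only possible when i = j). *)
Definition is_path_in (S : {pred 'I_N}) (i j : 'I_N) (s : seq 'I_N) : bool :=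
  if s is x :: p then
    [&& x == i, p != [::], last x p == j, all (mem S) s,
        uniq (belast x p) & uniq p]
  else false.

(* largest jump d(x,y) between consecutive points (distances are >= 0) *)
Definition max_jump (s : seq 'I_N) : R :=
  \big[Num.max/0]_(xy <- zip s (behead s)) d xy.1 xy.2.

(* MMJ(i,j | S): minimum of max_jump over all paths from i to j in S;
   0 when i = j. (The set of paths is finite, so inf is a minimum.) *)
Definition MMJ (i j : 'I_N) (S : {pred 'I_N}) : R :=
  if i == j then 0
  else inf [set max_jump s | s in [set s | is_path_in S i j s]].
End MMJ.

(* Main.v *)
Require Import Defs.
From HB Require Import structures.
From mathcomp Require Import all_boot all_order all_algebra.
From mathcomp Require Import boolp classical_sets reals.
Import Order.TTheory GRing.Theory Num.Theory.
Local Open Scope ring_scope.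

Section H.
Set Implicit Arguments. Unset Strict Implicit.
Local Open Scope classical_set_scope.
Variables (R : realType) (N : nat) (d : 'I_N -> 'I_N -> R).
Hypothesis d_sym : forall x y, d x y = d y x.
Hypothesis d_ge0 : forall x y, 0 <= d x y.

Lemma mj_ge0 s : 0 <= max_jump d s.
Proof.
rewrite /max_jump; apply: (big_ind (fun x => 0 <= x)) => //.
by move=> a b ha hb; rewrite le_max ha.
Qed.

Lemma mj_path m x p :
  (max_jump d (x :: p) <= m) = (0 <= m) && path (fun a b => d a b <= m) x p.
Proof.
elim: p x => [|y p IH] x; first by rewrite /max_jump /= big_nil andbT.
have -> : max_jump d (x :: y :: p) = Num.max (d x y) (max_jump d (y :: p)).
  by rewrite /max_jump /= big_cons.
rewrite ge_max IH /=.
by case: (d x y <= m); case: (0 <= m).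
Qed.

Definition walk (S : {pred 'I_N}) m x y q :=
  [&& path (fun a b => d a b <= m) x q, last x q == y & all (mem S) (x :: q)].

Lemma walk_short S m x y q : 0 <= m -> x != y -> walk S m x y q ->
  exists s, is_path_in S x y s /\ max_jump d s <= m.
Proof.
move=> m0 nxy /and3P[hp /eqP hl hall].
move: hl nxy; case: (shortenP hp) => p' hp' hu hsub hl nxy.
have hA : all (mem S) (x :: p').
  apply/allP => z; rewrite in_cons => /orP[/eqP->|/hsub hz].
    by move/allP: hall; apply; rewrite mem_head.
  by move/allP: hall; apply; rewrite in_cons hz orbT.
exists (x :: p'); split; last by rewrite mj_path m0.
rewrite /= eqxx hl eqxx /=; move: hA; rewrite /= => ->.
have -> : p' != [::] by case: p' {hp' hu hsub} hl nxy => //= <-; rewrite eqxx.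
move: (hu); rewrite /= => /andP[_ ->].
move: hu; rewrite lastI rcons_uniq => /andP[_ ->].
by [].
Qed.

Lemma path_walk S x y s : is_path_in S x y s ->
  exists q, s = x :: q /\ walk S (max_jump d s) x y q.
Proof.
case: s => [|x' q] //= /and3P[/eqP-> _ /andP[hl /andP[ha _]]].
exists q; split => //; apply/and3P; split => //.
by move: (lexx (max_jump d (x :: q))); rewrite mj_path => /andP[].
Qed.

Lemma walk_rev S m x y q : walk S m x y q -> walk S m y x (rev (belast x q)).
Proof.
move=> /and3P[hp /eqP hl hall]; apply/and3P; split.
- rewrite -hl rev_path; apply: sub_path hp => a b; by rewrite d_sym.
- rewrite -hl; clear hp hall hl; case/lastP: q => [|q z] //=.
  by rewrite belast_rcons rev_cons last_rcons.
- apply/allP => z; rewrite in_cons mem_rev => /orP[/eqP->|hz].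
    by move/allP: hall; apply; rewrite -hl mem_last.
  by move/allP: hall; apply; apply: mem_belast hz.
Qed.

Lemma walk_cat S m x y z q1 q2 : walk S m x y q1 -> walk S m y z q2 ->
  walk S m x z (q1 ++ q2).
Proof.
move=> /and3P[hp1 /eqP hl1 ha1] /and3P[hp2 hl2 /= /andP[_ ha2]].
apply/and3P; split.
- by rewrite cat_path hp1 hl1 hp2.
- by rewrite last_cat hl1.
- by rewrite -cat_cons all_cat ha1 ha2.
Qed.

Lemma walk_mono S S' m m' x y q : m <= m' -> {subset S <= S'} ->
  walk S m x y q -> walk S' m' x y q.
Proof.
move=> hm hS /and3P[hp hl ha]; apply/and3P; split => //.
  by apply: sub_path hp => a b /le_trans; apply.
by apply: sub_all ha => a /hS.
Qed.

Lemma MMJ_ne (S : {pred 'I_N}) x y : x != y -> x \in S -> y \in S ->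
  [set max_jump d s | s in [set s | is_path_in S x y s]] !=set0.
Proof.
move=> nxy hx hy; exists (max_jump d [:: x; y]); exists [:: x; y] => //.
by rewrite /= eqxx /= hx hy /= eqxx andbT.
Qed.

Lemma MMJ_lb (S : {pred 'I_N}) x y :
  has_lbound [set max_jump d s | s in [set s | is_path_in S x y s]].
Proof. by exists 0 => _ [s _ <-]; apply: mj_ge0. Qed.

Lemma MMJ_le_walk S m x y q : x != y -> 0 <= m -> walk S m x y q ->
  MMJ d x y S <= m.
Proof.
move=> nxy m0 hw; case: (@walk_short S m x y q m0 nxy hw) => s [hs hm].
rewrite /MMJ (negbTE nxy); apply: le_trans hm.
by apply: (ge_inf (MMJ_lb S x y)); exists s.
Qed.

Lemma MMJ_le_path S x y s : x != y -> is_path_in S x y s ->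
  MMJ d x y S <= max_jump d s.
Proof.
move=> nxy hs; rewrite /MMJ (negbTE nxy).
by apply: (ge_inf (MMJ_lb S x y)); exists s.
Qed.

Lemma MMJ_ge S x y c : x != y -> x \in S -> y \in S ->
  (forall s, is_path_in S x y s -> c <= max_jump d s) -> c <= MMJ d x y S.
Proof.
move=> nxy hx hy h; rewrite /MMJ (negbTE nxy).
by apply: lb_le_inf; [exact: MMJ_ne|move=> _ [s hs <-]; apply: h].
Qed.

Lemma MMJ_lt S x y c : x != y -> x \in S -> y \in S -> MMJ d x y S < c ->
  exists2 s, is_path_in S x y s & max_jump d s < c.
Proof.
move=> nxy hx hy; rewrite /MMJ (negbTE nxy) => /(inf_lt (@MMJ_ne S x y nxy hx hy)).
by case=> _ [s hs <-] hc; exists s.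
Qed.

Lemma MMJ_ge0 S x y : x \in S -> y \in S -> 0 <= MMJ d x y S.
Proof.
move=> hx hy; case: (eqVneq x y) => [->|nxy]; first by rewrite /MMJ eqxx.
by apply: MMJ_ge => // s _; apply: mj_ge0.
Qed.
End H.

Lemma walk_split (R : realType) N (d : 'I_N -> 'I_N -> R) S m x y z q1 q2 :
  walk d S m x y (q1 ++ z :: q2) -> walk d S m x z (rcons q1 z) /\ walk d S m z y q2.
Proof.
rewrite /walk -cat_rcons cat_path last_cat last_rcons -cat_cons all_cat.
move=> /and3P[/andP[h1 h2] h3 /andP[h4 h5]]; split; apply/and3P; split => //; rewrite ?last_rcons //.
by rewrite /= h5 andbT; apply: (allP h4); rewrite in_cons mem_rcons mem_head orbT.
Qed.

Theorem theorem3p5 (R : realType) (N : nat) (d : 'I_N -> 'I_N -> R)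
  (d_ge0 : forall x y, 0 <= d x y) (d_sym : forall x y, d x y = d y x)
  (d_refl : forall x, d x x = 0)
  (n : nat) (n_ge1 : (1 <= n)%N) (nN : (n < N)%N)
  (i j : 'I_N) (hi : (i < n)%N) (hj : (j < n)%N) :
  let p := Ordinal nN in (* the point Omega_{n+1} *)
  let x1 := MMJ d i j (Omega_upto n) in
  let t1 := MMJ d p i (Omega_upto n.+1) in
  let t2 := MMJ d p j (Omega_upto n.+1) in
  let x2 := Num.max t1 t2 in
  MMJ d i j (Omega_upto n.+1) = Num.min x1 x2.
Proof.
move=> p x1 t1 t2 x2; rewrite {}/x1 {}/x2 {}/t1 {}/t2.
set S := Omega_upto n; set S' := Omega_upto n.+1.
have hsub : {subset S <= S'} by move=> z; rewrite !inE => /ltnW.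
have hiS : i \in S by rewrite inE.
have hjS : j \in S by rewrite inE.
have hiS' := hsub _ hiS; have hjS' := hsub _ hjS.
have hpS' : p \in S' by rewrite inE /=.
have hpi : p != i by apply/eqP => h; move: hi; rewrite -h /= ltnn.
have hpj : p != j by apply/eqP => h; move: hj; rewrite -h /= ltnn.
have inS : forall z, z \in S' -> z != p -> z \in S.
  move=> z; rewrite !inE ltnS leq_eqVlt => /orP[/eqP hz|//] /eqP[].
  by apply: val_inj; rewrite /= hz.
case: (eqVneq i j) => [<-|nij].
  have -> : MMJ d i i S' = 0 by rewrite /MMJ eqxx.
  have -> : MMJ d i i S = 0 by rewrite /MMJ eqxx.
  by rewrite min_l // le_max; apply/orP; left; apply: MMJ_ge0.
apply/eqP; rewrite eq_le; apply/andP; split.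
  rewrite le_min; apply/andP; split.
    apply: MMJ_ge => // s hs.
    case: (path_walk d hs) => q [-> hw].
    exact: (MMJ_le_walk d_ge0 nij (mj_ge0 d_ge0 _) (walk_mono (lexx _) hsub hw)).
  rewrite leNgt; apply/negP; rewrite gt_max => /andP[h1 h2].
  case: (MMJ_lt hpi hpS' hiS' h1) => a ha ha'.
  case: (MMJ_lt hpj hpS' hjS' h2) => b hb hb'.
  case: (path_walk d ha) => qa [_ wa]; case: (path_walk d hb) => qb [_ wb].
  set m := Num.max (max_jump d a) (max_jump d b).
  have hma : max_jump d a <= m by rewrite le_max lexx.
  have hmb : max_jump d b <= m by rewrite le_max lexx orbT.
  have wa' := walk_rev d_sym (walk_mono hma (fun z (h : z \in S') => h) wa).
  have wb' := walk_mono hmb (fun z (h : z \in S') => h) wb.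
  have := MMJ_le_walk d_ge0 nij (le_trans (mj_ge0 d_ge0 a) hma) (walk_cat wa' wb').
  by rewrite leNgt gt_max ha' hb'.
apply: MMJ_ge => // s hs.
case: (path_walk d hs) => q [Es hw].
case: (boolP (p \in q)) => hpq.
  move: hw; case/splitPr: hpq => q1 q2 /walk_split [w1 w2].
  rewrite ge_min; apply/orP; right; rewrite ge_max; apply/andP; split.
    exact: (MMJ_le_walk d_ge0 hpi (mj_ge0 d_ge0 _) (walk_rev d_sym w1)).
  exact: (MMJ_le_walk d_ge0 hpj (mj_ge0 d_ge0 _) w2).
rewrite ge_min; apply/orP; left.
apply: (MMJ_le_walk (q:=q) d_ge0 nij (mj_ge0 d_ge0 _)).
move: hw => /and3P[h1 h2 h3]; apply/and3P; split => //.
apply/allP => z hz; apply: inS; first exact: (allP h3).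
apply/eqP => ez; move: hz; rewrite ez in_cons (negbTE hpq) orbF => /eqP pe.
by move: hpi; rewrite pe eqxx.
Qed.
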